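(* Let $p$ be a prime, $a_1,a_2,a_3\in\mathbb{F}_p$, $s=3+a_1+a_2+a_3$, and let $x\in\mathbb{F}_p^3$ be a solution of \[ x_1^2+x_2^2+x_3^2+a_1x_2x_3+a_2x_1x_3+a_3x_1x_2 = s\,x_1x_2x_3. \] For $k=1,2,3$ let $m_k$ replace $x_k$ by $-x_k + s x_{k-1}x_{k+1} - a_{k+1}x_{k-1} - a_{k-1}x_{k+1}$ (indices modulo $3$), leaving the other coordinates unchanged. If, for some index $i$, $m_{i-1}x = m_{i+1}x = x$, then \[ x_i^2\,(u^2-4)\,(u^2 + a_{i-1}a_{i+1}u + a_{i-1}^2 + a_{i+1}^2 - 4) = 0, \] where $u = s x_i - a_i$. *)

(* Defs.v *)
From mathcomp Require Import all_boot all_algebra.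

Set Implicit Arguments. Unset Strict Implicit. Unset Printing Implicit Defensive.
Import GRing.Theory.
Local Open Scope ring_scope.

(* Indices 1,2,3 of the paper are represented by 0,1,2 : 'I_3;
   index arithmetic is modulo 3. *)
Definition inext (k : 'I_3) : 'I_3 := inZp (k.+1).
Definition iprev (k : 'I_3) : 'I_3 := inZp (k.+2).

Definition s_of (p : nat) (a : 'I_3 -> 'F_p) : 'F_p := 3%:R + \sum_(k < 3) a k.

Definition on_surface (p : nat) (a x : 'I_3 -> 'F_p) : Prop :=
  \sum_(k < 3) (x k ^+ 2 + a k * x (iprev k) * x (inext k))
  = s_of a * x 0 * x 1 * x 2.

Definition m_inv (p : nat) (a : 'I_3 -> 'F_p) (k : 'I_3) (x : 'I_3 -> 'F_p)
  : 'I_3 -> 'F_p :=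
  fun j => if j == k then
             - x k + s_of a * x (iprev k) * x (inext k)
             - a (inext k) * x (iprev k) - a (iprev k) * x (inext k)
           else x j.

(* Main.v *)
Require Import Defs.
From mathcomp Require Import all_boot all_algebra ring.
From Stdlib Require Import FunctionalExtensionality.
Import GRing.Theory.
Local Open Scope ring_scope.

Lemma key (R : comNzRingType) (u aj ak z X Y : R) :
  X + X - (u * Y - ak * z) = 0 ->
  Y + Y - (u * X - aj * z) = 0 ->
  z ^+ 2 + X ^+ 2 + Y ^+ 2 + aj * z * Y + ak * z * X - u * X * Y = 0 ->
  z ^+ 2 * (u ^+ 2 - 4%:R) * (u ^+ 2 + aj * ak * u + aj ^+ 2 + ak ^+ 2 - 4%:R) = 0.
Proof.
move=> f1 f2 e3.
have hX : (4%:R - u ^+ 2) * X = - (z * (u * aj + 2%:R * ak)).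
  apply/eqP; rewrite -subr_eq0 opprK; apply/eqP.
  transitivity (2%:R * (X + X - (u * Y - ak * z)) + u * (Y + Y - (u * X - aj * z))); first ring.
  by rewrite f1 f2 !mulr0 addr0.
have hY : (4%:R - u ^+ 2) * Y = - (z * (u * ak + 2%:R * aj)).
  apply/eqP; rewrite -subr_eq0 opprK; apply/eqP.
  transitivity (2%:R * (Y + Y - (u * X - aj * z)) + u * (X + X - (u * Y - ak * z))); first ring.
  by rewrite f1 f2 !mulr0 addr0.
have K : forall dX dY, dX = - (z * (u * aj + 2%:R * ak)) -> dY = - (z * (u * ak + 2%:R * aj)) ->
  ((4%:R - u ^+ 2) * z) ^+ 2 + dX ^+ 2 + dY ^+ 2 + aj * z * (4%:R - u ^+ 2) * dY
  + ak * z * (4%:R - u ^+ 2) * dX - u * dX * dY =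
  z ^+ 2 * (u ^+ 2 - 4%:R) * (u ^+ 2 + aj * ak * u + aj ^+ 2 + ak ^+ 2 - 4%:R).
  by move=> ? ? -> ->; ring.
rewrite -(K _ _ hX hY).
transitivity ((4%:R - u ^+ 2) ^+ 2 *
  (z ^+ 2 + X ^+ 2 + Y ^+ 2 + aj * z * Y + ak * z * X - u * X * Y)); first ring.
by rewrite e3 mulr0.
Qed.

Ltac fin := move/eqP; rewrite eq_sym -subr_eq0 => /eqP <-; ring.
Ltac fin2 := move/eqP; rewrite -subr_eq0 => /eqP <-; ring.
Lemma ffv (T : Type) (f : 'I_3 -> T) :
  exists f0 f1 f2, f = (fun t : 'I_3 => nth f0 [:: f0; f1; f2] (val t)).
Proof.
exists (f ord0), (f (inord 1)), (f (inord 2)); apply: functional_extensionality.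
case => [[|[|[|n]]] H] //=; congr f; apply/val_inj; rewrite /= ?inordK //.
Qed.

Theorem proposition2p4 (p : nat) (hp : prime p) (a x : 'I_3 -> 'F_p)
  (hx : on_surface a x) (i : 'I_3) :
  m_inv a (iprev i) x = x -> m_inv a (inext i) x = x ->
  let u := s_of a * x i - a i in
  x i ^+ 2 * (u ^+ 2 - 4%:R)
    * (u ^+ 2 + a (iprev i) * a (inext i) * u
       + a (iprev i) ^+ 2 + a (inext i) ^+ 2 - 4%:R) = 0.
Proof.
move=> /(congr1 (fun f => f (iprev i))) hj /(congr1 (fun f => f (inext i))) hk u.
rewrite {}/u; move: hj hk; rewrite /m_inv !eqxx; move: hx; rewrite /on_surface.
rewrite !big_ord_recr big_ord0 /=.
set s := s_of a. clearbody s.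
have [x0 [x1 [x2 ->]]] := @ffv _ x.
have [a0 [a1 [a2 ->]]] := @ffv _ a.
case: i => [[|[|[|n]]] Hi] //; rewrite /iprev /inext /= => hs h1 h2.
- apply: (key _ (s * x0 - a0) a2 a1 _ x2 x1).
  + by move: h1; fin.
  + by move: h2; fin.
  + by move: hs; fin2.
- apply: (key _ (s * x1 - a1) a0 a2 _ x0 x2).
  + by move: h1; fin.
  + by move: h2; fin.
  + by move: hs; fin2.
- apply: (key _ (s * x2 - a2) a1 a0 _ x1 x0).
  + by move: h1; fin.
  + by move: h2; fin.
  + by move: hs; fin2.
Qed.
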